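(* Let $M$ be a mutually algebraic structure with universe an infinite cardinal $\lambda$ such that $Th(M)$ is not purely monadic. Then for some $k\ge2$ there is a subset $Y\subseteq\lambda^k$ definable in $M$ with parameters that is mutually algebraic and such that $Y\setminus\Delta_k$ is infinite, where $\Delta_k=\{(a,\dots,a):a\in\lambda\}$.
   Context: $Y\subseteq\lambda^k$ is mutually algebraic if there is an integer $m$ such that for every $a\in\lambda$ at most $m$ tuples of $Y$ have $a$ as a coordinate. $Y^*\subseteq\lambda^{k+\ell}$ is padded mutually algebraic if for some permutation $\sigma$ of the $k+\ell$ coordinates, $Y^*=\sigma(Y\times\lambda^\ell)$ for some mutually algebraic $Y\subseteq\lambda^k$. A structure $M$ with universe $\lambda$ is mutually algebraic if every set definable with parameters in $M$ is a boolean combination of parameter-definable padded mutually algebraic sets. A complete theory $T$ is purely monadic if for every model with universe $\lambda$, every parameter-definable $Y\subseteq\lambda^k$ is definable in some structure $(\lambda,U_1,\dots,U_n)$ with $U_i$ unary. *)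

(* Defs.v *)
From Stdlib Require Import List.
From mathcomp Require Import all_boot all_fingroup.

Set Implicit Arguments.
Unset Strict Implicit.
Unset Printing Implicit Defensive.

Record signature := Signature {
  func : Type; func_ar : func -> nat;
  rel  : Type; rel_ar  : rel -> nat }.

(* Terms and formulas, variables as de Bruijn indices (nat). *)
Inductive term (L : signature) : Type :=
  | tvar : nat -> term L
  | tapp (f : func L) : ('I_(func_ar f) -> term L) -> term L.

Inductive formula (L : signature) : Type :=
  | ftrue | ffalse
  | feq  : term L -> term L -> formula L
  | frel (r : rel L) : ('I_(rel_ar r) -> term L) -> formula L
  | fneg : formula L -> formula L
  | fand : formula L -> formula L -> formula L
  | f_or : formula L -> formula L -> formula L
  | fimp : formula L -> formula L -> formula L
  | fall : formula L -> formula L      (* binds variable 0 *)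
  | fex  : formula L -> formula L.     (* binds variable 0 *)

Fixpoint tbound L (n : nat) (t : term L) : Prop :=
  match t with
  | tvar i => i < n
  | tapp f args => forall j, tbound n (args j)
  end.

Fixpoint fbound L (n : nat) (phi : formula L) : Prop :=
  match phi with
  | ftrue | ffalse => True
  | feq t u => tbound n t /\ tbound n u
  | frel r args => forall j, tbound n (args j)
  | fneg p => fbound n p
  | fand p q | f_or p q | fimp p q => fbound n p /\ fbound n q
  | fall p | fex p => fbound n.+1 p
  end.

Definition sentence L (phi : formula L) := fbound 0 phi.

Record structure (L : signature) := Structure {
  carrier :> Type;
  fint : forall f : func L, ('I_(func_ar f) -> carrier) -> carrier;
  rint : forall r : rel L, ('I_(rel_ar r) -> carrier) -> Prop }.

Definition scons (X : Type) (a : X) (e : nat -> X) : nat -> X :=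
  fun n => match n with 0 => a | S m => e m end.

Fixpoint eval L (M : structure L) (e : nat -> M) (t : term L) : M :=
  match t with
  | tvar i => e i
  | tapp f args => @fint L M f (fun j => @eval L M e (args j))
  end.

Fixpoint sat L (M : structure L) (e : nat -> M) (phi : formula L) : Prop :=
  match phi with
  | ftrue => True
  | ffalse => False
  | feq t u => @eval L M e t = @eval L M e u
  | frel r args => @rint L M r (fun j => @eval L M e (args j))
  | fneg p => ~ @sat L M e p
  | fand p q => @sat L M e p /\ @sat L M e q
  | f_or p q => @sat L M e p \/ @sat L M e q
  | fimp p q => @sat L M e p -> @sat L M e q
  | fall p => forall a : M, @sat L M (scons a e) p
  | fex p => exists a : M, @sat L M (scons a e) p
  end.

Arguments eval {L} M e t.
Arguments sat {L} M e phi.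

(* N is a model of Th(M): M and N satisfy the same sentences. *)
Definition elem_equiv L (M N : structure L) : Prop :=
  forall phi : formula L, sentence phi ->
    ((forall e : nat -> M, @sat L M e phi) <-> (forall e : nat -> N, sat N e phi)).

(* Valuation: variables 0..k-1 get the tuple x, variables >= k get parameters p. *)
Definition tenv (X : Type) (k : nat) (x : 'I_k -> X) (p : nat -> X) : nat -> X :=
  fun i => if (insub i : option 'I_k) is Some j then x j else p (i - k).

Definition definable L (M : structure L) (k : nat) (Y : ('I_k -> M) -> Prop) : Prop :=
  exists (phi : formula L) (p : nat -> M),
    forall x, Y x <-> sat M (tenv x p) phi.

Arguments definable {L} M {k} Y.

Definition definable0 L (M : structure L) (k : nat) (Y : ('I_k -> M) -> Prop) : Prop :=
  exists phi : formula L, fbound k phi /\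
    forall (x : 'I_k -> M) (p : nat -> M), Y x <-> sat M (tenv x p) phi.

Arguments definable0 {L} M {k} Y.

Definition finite_set (X : Type) (A : X -> Prop) : Prop :=
  exists s : list X, forall x, A x -> In x s.

Definition infinite_set (X : Type) (A : X -> Prop) : Prop := ~ finite_set A.

(* Y ⊆ X^k is mutually algebraic: there is m such that for every a, at most m
   tuples of Y have a as a coordinate (no m+1 distinct such tuples). *)
Definition mutually_algebraic (X : Type) (k : nat) (Y : ('I_k -> X) -> Prop) : Prop :=
  exists m : nat, forall (a : X) (f : 'I_m.+1 -> ('I_k -> X)),
    (forall i, Y (f i) /\ exists j, f i j = a) -> ~ injective f.

(* Z ⊆ X^n is padded mutually algebraic: n = k + l and Z = σ(Y × X^l) for a
   permutation σ of the coordinates and a mutually algebraic Y ⊆ X^k. *)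
Definition padded_mut_alg (X : Type) (n : nat) (Z : ('I_n -> X) -> Prop) : Prop :=
  exists (k l : nat) (E : k + l = n) (s : {perm 'I_n}) (Y : ('I_k -> X) -> Prop),
    mutually_algebraic Y /\
    forall x : 'I_n -> X, Z x <-> Y (fun i : 'I_k => x (s (cast_ord E (lshift l i)))).

Inductive bool_comb (X : Type) (P : (X -> Prop) -> Prop) : (X -> Prop) -> Prop :=
  | bc_base A : P A -> bool_comb P A
  | bc_top : bool_comb P (fun _ => True)
  | bc_compl A : bool_comb P A -> bool_comb P (fun x => ~ A x)
  | bc_inter A B : bool_comb P A -> bool_comb P B -> bool_comb P (fun x => A x /\ B x).

Definition mut_alg_structure L (M : structure L) : Prop :=
  forall (k : nat) (Z : ('I_k -> M) -> Prop), definable M Z ->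
    exists B, bool_comb (fun W => definable M W /\ padded_mut_alg W) B /\
              forall x, Z x <-> B x.

Definition monadic_sig (n : nat) : signature :=
  {| func := void; func_ar := fun _ => 0; rel := 'I_n; rel_ar := fun _ => 1 |}.

Definition unary_struct L (N : structure L) (n : nat) (U : 'I_n -> N -> Prop)
  : structure (monadic_sig n) :=
  @Structure (monadic_sig n) (carrier N)
    (fun (f : void) _ => match f return carrier N with end)
    (fun (r : 'I_n) (args : 'I_1 -> carrier N) => U r (args ord0)).

Definition purely_monadic L (M : structure L) : Prop :=
  forall N : structure L, inhabited N -> elem_equiv M N ->
    forall (k : nat) (Y : ('I_k -> N) -> Prop), definable N Y ->
      exists (n : nat) (U : 'I_n -> N -> Prop), definable0 (unary_struct U) Y.

Definition diagonal (X : Type) (k : nat) : ('I_k -> X) -> Prop :=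
  fun x => exists a : X, forall i, x i = a.

(* Main.v *)
Require Import Defs.
From Stdlib Require Import List Classical FunctionalExtensionality.
From mathcomp Require Import all_boot all_fingroup zify.

Set Implicit Arguments.
Unset Strict Implicit.
Unset Printing Implicit Defensive.



Section Syntax.
Variable L : signature.

Fixpoint term_ind' (P : term L -> Prop) (Hv : forall i, P (tvar L i))
  (Ha : forall f args, (forall j, P (args j)) -> P (@tapp L f args)) (t : term L) : P t :=
  match t with
  | tvar i => Hv i
  | tapp f args => Ha f args (fun j => term_ind' Hv Ha (args j))
  end.

Fixpoint trename (s : nat -> nat) (t : term L) : term L :=
  match t with
  | tvar i => tvar L (s i)
  | tapp f args => tapp (fun j => trename s (args j))
  end.

Definition up (s : nat -> nat) : nat -> nat :=
  fun i => match i with 0 => 0 | j.+1 => (s j).+1 end.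

Fixpoint frename (s : nat -> nat) (phi : formula L) : formula L :=
  match phi with
  | ftrue => ftrue L
  | ffalse => ffalse L
  | feq t u => feq (trename s t) (trename s u)
  | Defs.frel r args => Defs.frel (fun j => trename s (args j))
  | fneg p => fneg (frename s p)
  | fand p q => fand (frename s p) (frename s q)
  | f_or p q => f_or (frename s p) (frename s q)
  | fimp p q => fimp (frename s p) (frename s q)
  | fall p => fall (frename (up s) p)
  | fex p => fex (frename (up s) p)
  end.

Lemma eval_rename (M : structure L) s e (t : term L) :
  eval M e (trename s t) = eval M (fun i => e (s i)) t.
Proof.
elim/term_ind': t => [i|f args IH] //=.
by f_equal; apply: functional_extensionality => j; apply: IH.
Qed.

Lemma scons_up (X : Type) (a : X) (e : nat -> X) s :
  (fun i => scons a e (up s i)) = scons a (fun i => e (s i)).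
Proof. by apply: functional_extensionality => -[|i]. Qed.

Lemma sat_rename (M : structure L) (phi : formula L) : forall s e,
  sat M e (frename s phi) <-> sat M (fun i => e (s i)) phi.
Proof.
elim: phi => [|//|t u|r args|p IH|p IHp q IHq|p IHp q IHq|p IHp q IHq|p IH|p IH] s e /=.
- by [].
- by rewrite !eval_rename.
- suff -> : (fun j => eval M e (trename s (args j))) = (fun j => eval M (fun i => e (s i)) (args j)) by [].
  by apply: functional_extensionality => j; rewrite eval_rename.
- by rewrite IH.
- by rewrite IHp IHq.
- by rewrite IHp IHq.
- by rewrite IHp IHq.
- by split => H a; move: (H a); rewrite IH scons_up.
- by split => -[a H]; exists a; move: H; rewrite IH scons_up.
Qed.

Fixpoint tfvb (t : term L) : nat :=
  match t with
  | tvar i => i.+1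
  | tapp f args => \max_(j < func_ar f) tfvb (args j)
  end.

Fixpoint fvb (phi : formula L) : nat :=
  match phi with
  | ftrue | ffalse => 0
  | feq t u => maxn (tfvb t) (tfvb u)
  | Defs.frel r args => \max_(j < rel_ar r) tfvb (args j)
  | fneg p => fvb p
  | fand p q | f_or p q | fimp p q => maxn (fvb p) (fvb q)
  | fall p | fex p => (fvb p).-1
  end.

Lemma tbound_mono n n' (t : term L) : n <= n' -> tbound n t -> tbound n' t.
Proof.
move=> le; elim/term_ind': t => [i|f args IH] /=; first by move=> h; apply: leq_trans le.
by move=> H j; exact: (IH j (H j)).
Qed.

Lemma fbound_mono (phi : formula L) : forall n n', n <= n' -> fbound n phi -> fbound n' phi.
Proof.
elim: phi => //=.
- by move=> t u n n' le [??]; split; apply: tbound_mono le _.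
- by move=> r args n n' le H j; apply: tbound_mono le _.
- by move=> p IHp q IHq n n' le [??]; split; [apply: IHp le _|apply: IHq le _].
- by move=> p IHp q IHq n n' le [??]; split; [apply: IHp le _|apply: IHq le _].
- by move=> p IHp q IHq n n' le [??]; split; [apply: IHp le _|apply: IHq le _].
- by move=> p IH n n' le; apply: IH.
- by move=> p IH n n' le; apply: IH.
Qed.

Lemma tbound_fvb (t : term L) : tbound (tfvb t) t.
Proof.
elim/term_ind': t => [i|f args IH] /=; first by [].
move=> j; apply: tbound_mono (IH j).
exact: (@leq_bigmax_cond _ (fun _ => true) (fun j => tfvb (args j)) j).
Qed.

Lemma fbound_fvb (phi : formula L) : fbound (fvb phi) phi.
Proof.
elim: phi => //=.
- by move=> t u; split; apply: tbound_mono (tbound_fvb _); rewrite ?leq_maxl ?leq_maxr.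
- move=> r args j; apply: tbound_mono (tbound_fvb _).
  exact: (@leq_bigmax_cond _ (fun _ => true) (fun j => tfvb (args j)) j).
- by move=> p IHp q IHq; split; apply: fbound_mono (IHp) || apply: fbound_mono (IHq); rewrite ?leq_maxl ?leq_maxr.
- by move=> p IHp q IHq; split; apply: fbound_mono (IHp) || apply: fbound_mono (IHq); rewrite ?leq_maxl ?leq_maxr.
- by move=> p IHp q IHq; split; apply: fbound_mono (IHp) || apply: fbound_mono (IHq); rewrite ?leq_maxl ?leq_maxr.
- by move=> p IH; apply: fbound_mono IH; case: (fvb p).
- by move=> p IH; apply: fbound_mono IH; case: (fvb p).
Qed.

Lemma eval_ext (M : structure L) n e e' (t : term L) : tbound n t ->
  (forall i, i < n -> e i = e' i) -> eval M e t = eval M e' t.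
Proof.
move=> + H; elim/term_ind': t => [i|f args IH] /=; first exact: H.
by move=> Hb; f_equal; apply: functional_extensionality => j; apply: IH.
Qed.

Lemma sat_ext (M : structure L) (phi : formula L) : forall n e e', fbound n phi ->
  (forall i, i < n -> e i = e' i) -> (sat M e phi <-> sat M e' phi).
Proof.
elim: phi => [|//|t u|r args|p IH|p IHp q IHq|p IHp q IHq|p IHp q IHq|p IH|p IH] n e e' /=.
- by [].
- by move=> [h1 h2] H; rewrite (eval_ext h1 H) (eval_ext h2 H).
- move=> Hb H.
  suff -> : (fun j => eval M e (args j)) = (fun j => eval M e' (args j)) by [].
  by apply: functional_extensionality => j; apply: eval_ext H.
- by move=> Hb H; rewrite (IH _ _ _ Hb H).
- by move=> [??] H; rewrite (IHp _ _ _ _ H) // (IHq _ _ _ _ H).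
- by move=> [??] H; rewrite (IHp _ _ _ _ H) // (IHq _ _ _ _ H).
- by move=> [??] H; rewrite (IHp _ _ _ _ H) // (IHq _ _ _ _ H).
- move=> Hb H; have H' : forall a i, i < n.+1 -> scons a e i = scons a e' i by move=> a [|i] //= hi; exact: H.
  by split=> H1 a; [apply/(IH _ _ _ Hb (H' a))|apply/(IH _ _ _ Hb (H' a))]; exact: H1 a.
- move=> Hb H; have H' : forall a i, i < n.+1 -> scons a e i = scons a e' i by move=> a [|i] //= hi; exact: H.
  by split=> -[a H1]; exists a; [apply/(IH _ _ _ Hb (H' a))|apply/(IH _ _ _ Hb (H' a))]; exact: H1.
Qed.

Lemma tbound_rename n n' s (t : term L) : tbound n t -> (forall i, i < n -> s i < n') ->
  tbound n' (trename s t).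
Proof.
move=> + H; elim/term_ind': t => [i|f args IH] /=; first exact: H.
by move=> Hb j; apply: IH.
Qed.

Lemma fbound_rename (phi : formula L) : forall n n' s, fbound n phi -> (forall i, i < n -> s i < n') ->
  fbound n' (frename s phi).
Proof.
elim: phi => [|//|t u|r args|p IH|p IHp q IHq|p IHp q IHq|p IHp q IHq|p IH|p IH] n n' s //=.
- by move=> [??] H; split; apply: tbound_rename H.
- by move=> Hb H j; apply: tbound_rename H.
- by move=> Hb H; apply: IH H.
- by move=> [??] H; split; [apply: IHp H|apply: IHq H].
- by move=> [??] H; split; [apply: IHp H|apply: IHq H].
- by move=> [??] H; split; [apply: IHp H|apply: IHq H].
- by move=> Hb H; apply: IH Hb _ => -[|i] //= hi; apply: H.
- by move=> Hb H; apply: IH Hb _ => -[|i] //= hi; apply: H.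
Qed.

Definition appv (X : Type) (n : nat) (v e : nat -> X) : nat -> X :=
  fun i => if i < n then v i else e (i - n).

Lemma app_scons (X : Type) n (v : nat -> X) a e :
  appv n v (scons a e) = appv n.+1 (fun i => if i < n then v i else a) e.
Proof.
apply: functional_extensionality => i; rewrite /appv.
case: (ltngtP i n) => hi.
- by rewrite ltnS (ltnW hi).
- have -> : (i < n.+1) = false by rewrite ltnNge hi.
  by rewrite -(subnSK hi).
- by subst i; rewrite ltnSn subnn.
Qed.

Lemma app_last (X : Type) n (v : nat -> X) e :
  appv n.+1 (fun i => if i < n then v i else v n) e = appv n.+1 v e.
Proof.
apply: functional_extensionality => i; rewrite /appv.
case: ltnP => // hi; case: ltnP => // hi2.
by have -> : i = n by apply/eqP; rewrite eqn_leq hi2 -ltnS hi.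
Qed.

Lemma sat_iter_fall (M : structure L) n (phi : formula L) : forall e,
  sat M e (iter n (@fall L) phi) <-> forall v, sat M (appv n v e) phi.
Proof.
elim: n => [|n IH] e /=.
  have E : forall v, appv 0 v e = e by move=> v; apply: functional_extensionality => i; rewrite /appv subn0.
  by split => [H v|H]; [rewrite E|move: (H e); rewrite E].
split.
- move=> H v; have := (proj1 (IH _) (H (v n)) v).
  by rewrite app_scons app_last.
- move=> H a; apply/IH => v.
  by rewrite app_scons; apply: H.
Qed.

Lemma sat_iter_fex (M : structure L) n (phi : formula L) : forall e,
  sat M e (iter n (@fex L) phi) <-> exists v, sat M (appv n v e) phi.
Proof.
elim: n => [|n IH] e /=.
  have E : forall v, appv 0 v e = e by move=> v; apply: functional_extensionality => i; rewrite /appv subn0.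
  by split => [H|[v H]]; [exists e; rewrite E|move: H; rewrite E].
split.
- move=> [a /IH [v H]]; exists (fun i => if i < n then v i else a).
  by rewrite -app_scons.
- move=> [v H]; exists (v n); apply/IH; exists v.
  by rewrite app_scons app_last.
Qed.

Lemma fbound_iter_fall n (phi : formula L) : forall b, fbound (n + b) phi -> fbound b (iter n (@fall L) phi).
Proof. elim: n => [|n IH] b //= H; apply: IH; by rewrite addnS. Qed.

Lemma fbound_iter_fex n (phi : formula L) : forall b, fbound (n + b) phi -> fbound b (iter n (@fex L) phi).
Proof. elim: n => [|n IH] b //= H; apply: IH; by rewrite addnS. Qed.

End Syntax.

Lemma tenv_lt (X : Type) k (x : 'I_k -> X) p (i : 'I_k) : tenv x p i = x i.
Proof. by rewrite /tenv valK. Qed.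

Lemma tenv_ge (X : Type) k (x : 'I_k -> X) p i : k <= i -> tenv x p i = p (i - k).
Proof. by move=> h; rewrite /tenv insubF // ltnNge h. Qed.



Definition sh (X : Type) (r : nat -> X) o := fun i => r (o + i).

Section QF.
Variables (L : signature) (m : nat).

Inductive qf := QT | QN of qf | QA of qf & qf | QEq of 'I_m & 'I_m | QU of 'I_m & formula L.

Fixpoint qsize q := match q with
  | QT => 0 | QN q => qsize q | QA a b => qsize a + qsize b
  | QEq _ _ => 0 | QU _ d => (fvb d).+1 end.

Fixpoint sem (X : structure L) (z : 'I_m -> X) q (r : nat -> X) : Prop :=
  match q with
  | QT => True
  | QN q => ~ sem z q r
  | QA a b => sem z a r /\ sem z b (sh r (qsize a))
  | QEq a b => z a = z b
  | QU a d => sat X (scons (z a) r) d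
  end.

Lemma sem_ext (X : structure L) z q : forall r r', (forall i, i < qsize q -> r i = r' i) ->
  (sem (X:=X) z q r <-> sem z q r').
Proof.
elim: q => [|q IH|a IHa b IHb|a b|a d] r r' H /=.
- by [].
- by rewrite (IH _ _ H).
- rewrite (IHa r r'); last by move=> i hi; apply: H; apply: leq_trans hi (leq_addr _ _).
  rewrite (IHb (sh r (qsize a)) (sh r' (qsize a))) //.
  by move=> i hi; apply: H; rewrite ltn_add2l.
- by [].
- apply: (sat_ext (n := fvb d)); first exact: fbound_fvb.
  move=> [|i] //= hi; apply: H; rewrite ltnS; do 2 apply: ltnW; exact: hi.
Qed.

Fixpoint qcomp q off : formula L :=
  match q with
  | QT => ftrue L
  | QN q => fneg (qcomp q off)
  | QA a b => fand (qcomp a off) (qcomp b (off + qsize a))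
  | QEq a b => feq (tvar L a) (tvar L b)
  | QU a d => frename (fun i => if i is j.+1 then m + off + j else nat_of_ord a) d
  end.

Lemma comp_sat (X : structure L) q : forall off (E : nat -> X),
  sat X E (qcomp q off) <-> sem (fun a : 'I_m => E a) q (fun i => E (m + off + i)).
Proof.
elim: q => [|q IH|a IHa b IHb|a b|a d] off E /=.
- by [].
- by rewrite IH.
- rewrite IHa IHb.
  suff -> : (fun i => E (m + (off + qsize a) + i)) = sh (fun i => E (m + off + i)) (qsize a) by [].
  by apply: functional_extensionality => i; rewrite /sh !addnA.
- by [].
- rewrite sat_rename.
  suff -> : (fun i => E (if i is j.+1 then m + off + j else nat_of_ord a)) =
    scons (E a) (fun i => E (m + off + i)) by [].
  by apply: functional_extensionality => -[|i].
Qed.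

Lemma fbound_comp q : forall off, fbound (m + off + qsize q) (qcomp q off).
Proof.
elim: q => [|q IH|a IHa b IHb|a b|a d] off /=.
- by [].
- exact: IH.
- split.
  + apply: fbound_mono (IHa off); by rewrite addnA leq_addr.
  + by have := IHb (off + qsize a); rewrite !addnA.
- by rewrite addn0; split; apply: leq_trans (ltn_ord _) (leq_addr _ _).
- apply: fbound_rename (fbound_fvb d) _ => -[|i] /= hi.
  + by apply: leq_trans (ltn_ord a) _; rewrite -addnA leq_addr.
  + by rewrite ltn_add2l ltnS; do 2 apply: ltnW.
Qed.

Fixpoint Dfun (X : structure L) q (r : nat -> X) : nat -> X -> Prop :=
  match q with
  | QN q => Dfun q r
  | QA a b => fun i => if i < qsize a then Dfun a r i else Dfun b (sh r (qsize a)) (i - qsize a)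
  | QU a d => fun i y => if i == 0 then sat X (scons y r) d else False
  | _ => fun _ _ => False
  end.

Variables (N : nat) (tau : 'I_m -> nat).

Fixpoint mono q off : formula (monadic_sig N.+1) :=
  match q with
  | QT => ftrue _
  | QN q => fneg (mono q off)
  | QA a b => fand (mono a off) (mono b (off + qsize a))
  | QEq a b => feq (tvar _ (tau a)) (tvar _ (tau b))
  | QU a d => @Defs.frel (monadic_sig N.+1) (inord (m + off) : 'I_N.+1) (fun _ => tvar _ (tau a))
  end.

Lemma iff_and (A A' B B' : Prop) : (A <-> A') -> (B <-> B') -> (A /\ B <-> A' /\ B').
Proof. tauto. Qed.

Lemma mono_sat (X : structure L) (Uf : nat -> X -> Prop) (z : 'I_m -> X) q :
  forall off r env, m + off + qsize q <= N ->
  (forall i y, i < qsize q -> (Uf (m + off + i) y <-> Dfun q r i y)) ->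
  (forall a, env (tau a) = z a) ->
  (sat (unary_struct (fun r : 'I_N.+1 => Uf r)) env (mono q off) <-> sem z q r).
Proof.
elim: q => [|q IH|a IHa b IHb|a b|a d] off r env Hb HU Hz /=.
- by [].
- by rewrite (IH off r env Hb HU Hz).
- apply: iff_and.
  + apply: IHa Hz.
    * by apply: leq_trans Hb; rewrite leq_add2l leq_addr.
    * move=> i y hi; rewrite HU /=; first by rewrite hi.
      by apply: leq_trans hi (leq_addr _ _).
  + apply: IHb Hz.
    * by move: Hb; rewrite /= !addnA.
    * move=> i y hi; have -> : m + (off + qsize a) + i = m + off + (qsize a + i) by rewrite !addnA.
      rewrite HU /=; last by rewrite ltn_add2l.
      by rewrite ltnNge leq_addr /= addKn.
- by rewrite !Hz.
- rewrite inordK; last by rewrite ltnS; apply: leq_trans _ Hb; exact: leq_addr.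
  by rewrite Hz -(addn0 (m + off)) HU.
Qed.

Lemma fbound_mono_q K q : (forall a, tau a < K) -> forall off, fbound K (mono q off).
Proof.
move=> H; elim: q => [|q IH|a IHa b IHb|a b|a d] off //=.
Qed.

End QF.



Lemma In_mem (T : eqType) (x : T) s : x \in s -> In x s.
Proof.
elim: s => [|y s IH] //=; rewrite in_cons => /orP [/eqP ->|h]; [by left|right; exact: IH h].
Qed.

Lemma In_enum (I : finType) (i : I) : In i (enum I).
Proof. by apply: In_mem; rewrite mem_enum. Qed.

Section Rep.
Variables (L : signature) (M : structure L) (c : M).

Definition rep m (W : ('I_m -> M) -> Prop) :=
  exists (q : qf L m) (r : nat -> M), forall x, W x <-> sem x q r.

Lemma rep_ext m (W W' : ('I_m -> M) -> Prop) : (forall x, W x <-> W' x) -> rep W -> rep W'.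
Proof. by move=> H [q [r Hq]]; exists q, r => x; rewrite -H. Qed.

Lemma rep_top m : rep (fun _ : 'I_m -> M => True).
Proof. by exists (QT L m), (fun _ => c). Qed.

Lemma rep_neg m (W : ('I_m -> M) -> Prop) : rep W -> rep (fun x => ~ W x).
Proof. by move=> [q [r Hq]]; exists (QN q), r => x /=; rewrite Hq. Qed.

Lemma rep_false m : rep (fun _ : 'I_m -> M => False).
Proof. apply: rep_ext (rep_neg (rep_top m)) => x; tauto. Qed.

Lemma rep_and m (W W' : ('I_m -> M) -> Prop) : rep W -> rep W' -> rep (fun x => W x /\ W' x).
Proof.
move=> [q1 [r1 H1]] [q2 [r2 H2]].
exists (QA q1 q2), (fun i => if i < qsize q1 then r1 i else r2 (i - qsize q1)) => x /=.
have E1 : sem x q1 (fun i => if i < qsize q1 then r1 i else r2 (i - qsize q1)) <-> sem x q1 r1.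
  by apply: sem_ext => i ->.
rewrite H1 H2 E1.
suff -> : sh (fun i => if i < qsize q1 then r1 i else r2 (i - qsize q1)) (qsize q1) = r2 by [].
by apply: functional_extensionality => i; rewrite /sh ltnNge leq_addr /= addKn.
Qed.

Lemma rep_or m (W W' : ('I_m -> M) -> Prop) : rep W -> rep W' -> rep (fun x => W x \/ W' x).
Proof.
move=> h1 h2; apply: rep_ext (rep_neg (rep_and (rep_neg h1) (rep_neg h2))) => x; tauto.
Qed.

Lemma rep_all_list m (A : Type) (l : list A) (P : A -> ('I_m -> M) -> Prop) :
  (forall a, rep (P a)) -> rep (fun x => forall a, In a l -> P a x).
Proof.
move=> H; elim: l => [|a l IH] /=.
  by apply: rep_ext (rep_top m) => x; split.
apply: rep_ext (rep_and (H a) IH) => x; split.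
- by move=> [h1 h2] b [<-|hb] //; apply: h2.
- by move=> h; split; [apply: h; left|move=> b hb; apply: h; right].
Qed.

Lemma rep_ex_list m (A : Type) (l : list A) (P : A -> ('I_m -> M) -> Prop) :
  (forall a, rep (P a)) -> rep (fun x => exists a, In a l /\ P a x).
Proof.
move=> H; elim: l => [|a l IH] /=.
  by apply: rep_ext (rep_false m) => x; split => // -[a []].
apply: rep_ext (rep_or (H a) IH) => x; split.
- by move=> [h|[b [hb h]]]; [exists a; split; [left|]|exists b; split; [right|]].
- by move=> [b [[<-|hb] h]]; [left|right; exists b].
Qed.

Lemma rep_all_fin m (I : finType) (P : I -> ('I_m -> M) -> Prop) :
  (forall a, rep (P a)) -> rep (fun x => forall a, P a x).
Proof.
move=> H; apply: rep_ext (rep_all_list (enum I) H) => x; split.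
- by move=> h a; apply: h; apply: In_enum.
- by move=> h a _; apply: h.
Qed.

Lemma rep_eq m (a b : 'I_m) : rep (fun x => x a = x b).
Proof. by exists (@QEq L m a b), (fun _ => c). Qed.

Lemma rep_unary m (a : 'I_m) d r : rep (fun x => sat M (scons (x a) r) d).
Proof. by exists (QU a d), r. Qed.

Lemma rep_eqc m (a : 'I_m) (t : M) : rep (fun x => x a = t).
Proof.
apply: rep_ext (rep_unary a (feq (tvar L 0) (tvar L 1)) (fun _ => t)) => x /=; split => //.
Qed.

Lemma subst_def m n (chi : formula L) (q : nat -> M) (f : 'I_m -> option 'I_n) :
  exists (psi : formula L) (q' : nat -> M), forall y : 'I_n -> M,
    sat M (tenv y q') psi <->
    sat M (tenv (fun j => match f j with Some i => y i | None => c end) q) chi.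
Proof.
pose sg := fun j : nat => match (insub j : option 'I_m) with
  | Some j' => match f j' with Some i => nat_of_ord i | None => n end
  | None => n.+1 + (j - m) end.
exists (frename sg chi), (scons c q) => y; rewrite sat_rename.
suff -> : (fun i => tenv y (scons c q) (sg i)) =
  tenv (fun j => match f j with Some i => y i | None => c end) q by [].
apply: functional_extensionality => j; rewrite /sg.
case: (ltnP j m) => hj.
- rewrite (insubT (fun i => i < m) hj) (tenv_lt _ _ (Ordinal hj)) /=.
  case: (f _) => [i|]; first by rewrite tenv_lt.
  by rewrite tenv_ge // subnn.
- rewrite insubF; last by rewrite ltnNge hj.
  rewrite tenv_ge; last by apply: leq_trans (leqnSn n) (leq_addr _ _).
  by rewrite tenv_ge // addSn subSn ?leq_addr // (addnC n) addnK.
Qed.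

End Rep.



Section Base.
Variables (L : signature) (M : structure L) (c : M).
Hypothesis Hfin : forall k, 2 <= k -> forall Y : ('I_k -> M) -> Prop,
  definable M Y -> mutually_algebraic Y -> finite_set (fun x => Y x /\ ~ diagonal x).

Lemma rep_base m (W : ('I_m -> M) -> Prop) : definable M W -> padded_mut_alg W -> rep W.
Proof.
move=> [chi [q Hdef]] [k [l [E [s [Y [MAY HW]]]]]].
pose pi := fun i : 'I_k => s (cast_ord E (lshift l i)).
pose fo := fun j : 'I_m => split (cast_ord (esym E) ((s^-1)%g j)).
have Hpi : forall i, fo (pi i) = inl i.
  by move=> i; rewrite /fo /pi permK cast_ordK; exact: (unsplitK (inl _ i)).
pose xt := fun g : 'I_k -> M => fun j => match fo j with inl i => g i | inr _ => c end.
have Hxt : forall g, (fun i => xt g (pi i)) = g.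
  by move=> g; apply: functional_extensionality => i; rewrite /xt Hpi.
have HWY : forall g, W (xt g) <-> Y g by move=> g; rewrite HW Hxt.
have HWx : forall x, W x <-> Y (fun i => x (pi i)) by move=> x; rewrite HW.
have YD : definable M Y.
  have [psi [q' Hpsi]] := subst_def c chi q (fun j => match fo j with inl i => Some i | inr _ => None end).
  exists psi, q' => y; rewrite Hpsi -HWY Hdef.
  suff -> : (fun j => match (match fo j with inl i => Some i | inr _ => None end) with
     Some i => y i | None => c end) = xt y by [].
  by apply: functional_extensionality => j; rewrite /xt; case: (fo j).
case: (posnP k) => hk.
- have Hall : forall y y' : 'I_k -> M, y = y'.
    move=> y y'; apply: functional_extensionality => i; have := ltn_ord i; move: (nat_of_ord i) => ii; lia.
  case: (classic (Y (fun _ => c))) => hY.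
  + by apply: rep_ext (rep_top c m) => x; rewrite HWx (Hall (fun i => x (pi i)) (fun _ => c)); tauto.
  + by apply: rep_ext (rep_false c m) => x; rewrite HWx (Hall (fun i => x (pi i)) (fun _ => c)); tauto.
- pose i0 := Ordinal hk.
  have [delta [q1 Hd]] := subst_def c chi q
     (fun j => match fo j with inl _ => Some (ord0 : 'I_1) | inr _ => None end).
  have HD : forall a, Y (fun _ => a) <-> sat M (scons a q1) delta.
    move=> a; suff -> : scons a q1 = tenv (fun _ : 'I_1 => a) q1.
      rewrite Hd -HWY Hdef.
      suff -> : (fun j => match (match fo j with inl _ => Some (ord0 : 'I_1) | inr _ => None end) with
        Some i => a | None => c end) = xt (fun _ => a) by [].
      by apply: functional_extensionality => j; rewrite /xt; case: (fo j).
    apply: functional_extensionality => -[|i].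
    + by rewrite (tenv_lt _ _ (ord0 : 'I_1)).
    + by rewrite tenv_ge // subn1.
  have [sl Hsl] : finite_set (fun y => Y y /\ ~ diagonal y).
    case: (leqP 2 k) => h2; first exact: Hfin _ h2 _ YD MAY.
    exists nil => y [_ hnd]; apply: hnd; exists (y i0) => i; congr y; apply: val_inj => /=.
    have := ltn_ord i; lia.
  have Key : forall y, Y y <-> (Y (fun _ => y i0) /\ forall i, y i = y i0) \/
      (exists t, In t sl /\ ((Y t /\ ~ diagonal t) /\ forall i, y i = t i)).
    move=> y; split.
    - move=> hy; case: (classic (diagonal y)) => hd.
      + left; case: hd => a ha.
        have Ey : y = (fun _ => y i0) by apply: functional_extensionality => i; rewrite !ha.
        by split; [rewrite -Ey | move=> i; rewrite !ha].
      + right; exists y; split; [apply: Hsl; by split | by split].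
    - move=> [[hy hi]|[t [_ [[ht _] hti]]]].
      + suff -> : y = (fun _ => y i0) by [].
        by apply: functional_extensionality.
      + suff -> : y = t by [].
        by apply: functional_extensionality.
  have R1 : rep (fun x : 'I_m -> M => Y (fun _ => x (pi i0)) /\ forall i, x (pi i) = x (pi i0)).
    apply: rep_and; first by apply: rep_ext (rep_unary (pi i0) delta q1) => x; rewrite HD.
    by apply: (rep_all_fin c) => i; exact: rep_eq.
  have R2 : rep (fun x : 'I_m -> M => exists t, In t sl /\ ((Y t /\ ~ diagonal t) /\ forall i, x (pi i) = t i)).
    apply: (rep_ex_list c) => t; case: (classic (Y t /\ ~ diagonal t)) => ht.
    + apply: rep_ext (rep_all_fin c (fun i => rep_eqc (pi i) (t i))) => x; tauto.
    + apply: rep_ext (rep_false c m) => x; tauto.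
  by apply: rep_ext (rep_or R1 R2) => x; rewrite HWx; exact: (iff_sym (Key (fun i => x (pi i)))).
Qed.

Lemma rep_bool m (B : ('I_m -> M) -> Prop) :
  bool_comb (fun W => definable M W /\ padded_mut_alg W) B -> rep B.
Proof.
elim => [A [h1 h2]| |A _ IH|A B' _ IHA _ IHB].
- exact: rep_base.
- exact: rep_top c m.
- exact: rep_neg.
- exact: rep_and.
Qed.

End Base.



Fixpoint consf (Nn k j : nat) : formula (monadic_sig Nn.+1) :=
  match j with
  | 0 => ftrue _
  | j'.+1 => fand (consf Nn k j')
      (@Defs.frel (monadic_sig Nn.+1) (inord (k + j') : 'I_Nn.+1) (fun _ => tvar _ j'))
  end.

Lemma consf_sat (L : signature) (X : structure L) Nn k (Uf : nat -> X -> Prop) j env :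
  k + j <= Nn ->
  (sat (unary_struct (fun r : 'I_Nn.+1 => Uf r)) env (consf Nn k j) <->
   forall i, i < j -> Uf (k + i) (env i)).
Proof.
elim: j => [|j IH] hb /=; first by split.
rewrite IH; last by lia.
rewrite inordK; last by lia.
split.
- move=> [h1 h2] i hi; case: (ltngtP i j) => hij; first exact: h1.
  + lia.
  + by subst i.
- move=> h; split; first by move=> i hi; apply: h; lia.
  by apply: h.
Qed.

Lemma fbound_consf Nn k j K : j <= K -> fbound K (consf Nn k j).
Proof.
elim: j => [|j IH] hj //=; split; first by apply: IH; lia.
by move=> _ /=; lia.
Qed.

Theorem lemma4p4 (L : signature) (M : structure L) :
  infinite_set (fun _ : M => True) ->
  mut_alg_structure M ->
  ~ purely_monadic M ->
  exists k : nat, 2 <= k /\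
    exists Y : ('I_k -> M) -> Prop,
      definable M Y /\ mutually_algebraic Y /\
      infinite_set (fun x => Y x /\ ~ diagonal x).
Proof.
move=> Hinf Hma Hpm.
have [c _] : exists c : M, True.
  apply: NNPP => hn; apply: Hinf; exists nil => x _; apply: hn; by exists x.
apply: NNPP => Hno; apply: Hpm.
have Hfin : forall k, 2 <= k -> forall Y : ('I_k -> M) -> Prop,
    definable M Y -> mutually_algebraic Y -> finite_set (fun x => Y x /\ ~ diagonal x).
  move=> k hk Y hY hma; apply: NNPP => hnf; apply: Hno; exists k; split => //.
  by exists Y.
move=> N [d] Heq k Y [phi [p HY]].
pose m := maxn k (fvb phi).
have hkm : k <= m by apply: leq_maxl.
have hphi : fbound m phi by apply: fbound_mono (fbound_fvb phi); apply: leq_maxr.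
pose Z := fun x : 'I_m -> M => sat M (tenv x (fun _ => c)) phi.
have [th [rho Hth]] : rep Z.
  have HZd : definable M Z by exists phi, (fun _ => c) => x.
  have [B [HB HZB]] := Hma m Z HZd.
  by apply: rep_ext (rep_bool c Hfin HB) => x; rewrite HZB.
pose B := qsize th.
pose Phi := fand (fimp phi (qcomp th 0)) (fimp (qcomp th 0) phi).
pose S := iter B (@fex L) (iter m (@fall L) Phi).
have Hsent : sentence S.
  rewrite /sentence /S; apply: fbound_iter_fex; rewrite addn0; apply: fbound_iter_fall.
  have h1 : fbound (m + B) phi by apply: fbound_mono hphi; apply: leq_addr.
  have h2 : fbound (m + B) (qcomp th 0) by have := fbound_comp th 0; rewrite addn0.
  by rewrite /Phi /=; tauto.
have Hcomp : forall (X : structure L) (v r : nat -> X),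
    sat X (appv m v r) (qcomp th 0) <-> sem (fun a : 'I_m => v a) th r.
  move=> X v r; rewrite comp_sat.
  have -> : (fun a : 'I_m => appv m v r a) = (fun a : 'I_m => v a).
    by apply: functional_extensionality => a; rewrite /appv ltn_ord.
  have -> : (fun i => appv m v r (m + 0 + i)) = r.
    by apply: functional_extensionality => i; rewrite /appv addn0 ltnNge leq_addr /= addKn.
  by [].
have HM : forall e, sat M e S.
  move=> e; apply/sat_iter_fex; exists rho; apply/sat_iter_fall => v /=.
  have E1 : sat M (appv m v (appv B rho e)) phi <-> Z (fun a => v a).
    apply: sat_ext hphi _ => i hi.
    by rewrite /appv hi (tenv_lt _ _ (Ordinal hi)).
  have E2 : sat M (appv m v (appv B rho e)) (qcomp th 0) <-> sem (fun a : 'I_m => v a) th rho.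
    by rewrite Hcomp; apply: sem_ext => i hi; rewrite /appv hi.
  rewrite E1 E2 -Hth; tauto.
have := proj1 (Heq S Hsent) HM (fun _ => d).
move/sat_iter_fex => [w /sat_iter_fall Hw].
pose rho' := appv B w (fun _ => d).
have HN : forall v, sat N (appv m v rho') phi <-> sem (fun a : 'I_m => v a) th rho'.
  move=> v; rewrite -Hcomp; have := Hw v; rewrite /Phi /=; tauto.
have HYN : forall x, Y x <-> sem (fun a : 'I_m => tenv x p a) th rho'.
  move=> x; rewrite HY -HN; apply: sat_ext hphi _ => i hi.
  by rewrite /appv hi.
pose Uf : nat -> N -> Prop := fun i y => if i < m then y = p (i - k) else Dfun th rho' (i - m) y.
pose U := fun r : 'I_(m + B).+1 => Uf r.
pose tau := fun a : 'I_m => if a < k then m - k + a else a - k.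
pose mu := iter (m - k) (@fex _) (fand (consf (m + B) k (m - k)) (mono (m + B) tau th 0)).
have Hz : forall (x : 'I_k -> N) p'' w', (forall i, i < m - k -> w' i = p i) ->
    forall a : 'I_m, appv (m - k) w' (tenv x p'') (tau a) = tenv x p a.
  move=> x p'' w' hw a; rewrite /tau; case: (ltnP a k) => h /=.
  - rewrite /appv.
    have -> : (m - k + a < m - k) = false by lia.
    have -> : m - k + a - (m - k) = a by lia.
    by rewrite (tenv_lt x p'' (Ordinal h)) (tenv_lt x p (Ordinal h)).
  - rewrite /appv.
    have -> : (a - k < m - k) = true by have := ltn_ord a; lia.
    rewrite hw ?tenv_ge //; have := ltn_ord a; lia.
exists (m + B).+1, U, mu; split.
  apply: fbound_iter_fex; rewrite subnK //; split.
  + by apply: fbound_consf; apply: leq_subr.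
  + apply: fbound_mono_q => a; rewrite /tau; have := ltn_ord a; case: ifP => h; lia.
move=> x p''; rewrite HYN sat_iter_fex; split.
- move=> Hs; exists p; split.
  + apply/consf_sat; first by lia.
    move=> i hi; rewrite /Uf /appv hi.
    have -> : (k + i < m) = true by lia.
    by have -> : k + i - k = i by lia.
  + apply/(mono_sat (Uf := Uf) (r := rho') (z := fun a : 'I_m => tenv x p a)) => //.
    * by rewrite addn0.
    * move=> i y hi; rewrite /Uf.
      have -> : (m + 0 + i < m) = false by lia.
      by have -> : m + 0 + i - m = i by lia.
    * by apply: Hz.
- move=> [w' [Hc Hm]].
  have hw : forall i, i < m - k -> w' i = p i.
    move=> i hi; have hb : k + (m - k) <= m + B by lia.
    have := proj1 (consf_sat (Uf := Uf) (appv (m - k) w' (tenv x p'')) hb) Hc i hi.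
    rewrite /Uf /appv hi.
    have -> : (k + i < m) = true by lia.
    by have -> : k + i - k = i by lia.
  apply: (proj1 (@mono_sat _ _ (m + B) tau N Uf (fun a : 'I_m => tenv x p a) th 0 rho' (appv (m - k) w' (tenv x p'')) _ _ _) Hm).
  + by rewrite addn0.
  + move=> i y hi; rewrite /Uf.
    have -> : (m + 0 + i < m) = false by lia.
    by have -> : m + 0 + i - m = i by lia.
  + by apply: Hz.
Qed.
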